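(* Let $L>0$, let $v_\textup{d}>0$ be a constant, and let $K:\mathbb{R}\to\mathbb{R}$ satisfy the following: the support of $K$ is $[0,R]$ with $0<R<L$; $K\in C^2(0,R)$ with $K,K''\in L^\infty(0,R)$; $K(z)>0$ and $K'(z)<0$ for $z\in(0,R)$; $K(0)=K(R)=0$ and $K(0^+):=\lim_{z\to0^+}K(z)>0$. Consider on the periodic domain $[0,L)$ the nonlocal conservation law \[ \partial_t\rho_t+\partial_x\Big(\rho_t\Big(v_\textup{d}-\int K(y-x)\rho_t(y)\,dy\Big)\Big)=0. \] Then every spatially homogeneous (constant) density $\rho_t(x)\equiv\bar\rho\ge0$ is a solution, and it is locally (i.e. linearly) stable and attractive: for the linearized equation around $\bar\rho$, every spatially periodic Fourier mode $e^{\sigma_k t+\mathbf{i}\frac{2\pi}{L}kx}$ with $k\in\mathbb{Z}\setminus\{0\}$ has $\operatorname{Re}(\sigma_k)<0$.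
   Context: $\mathbf{i}$ denotes the imaginary unit. For the constant solution the velocity is $v[\bar\rho]=v_\textup{d}-\bar\rho\int_0^RK(z)\,dz$. The constant mode $k=0$ is excluded since it corresponds to a constant-in-space perturbation. *)

(* Defs.v *)
From Stdlib Require Export Reals ZArith.
From Coquelicot Require Export Coquelicot.
Open Scope R_scope.

Definition Cexp (z : C) : C := (exp (Re z) * cos (Im z), exp (Re z) * sin (Im z)).

(* Densities are functions rho : time -> space -> R, defined on the whole line in
   space and L-periodic (this encodes the periodic domain [0,L)).
   The nonlocal term  \int K(y-x) rho(y) dy  over the periodic domain is the
   integral over one period starting at x: since supp K = [0,R] with R < L,
   K(y-x) for y in [x, x+L) is exactly the L-periodization of K. *)
Definition nl_int (L : R) (K : R -> R) (f : R -> R) (x : R) : R :=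
  RInt (fun y => K (y - x) * f y) x (x + L).

Definition L_periodic (L : R) (u : R -> R -> R) : Prop :=
  forall t x, u t (x + L) = u t x.

Definition is_solution (L vd : R) (K : R -> R) (rho : R -> R -> R) : Prop :=
  L_periodic L rho /\
  forall t x, exists dt dx : R,
    is_derive (fun s => rho s x) t dt /\
    is_derive (fun y => rho t y * (vd - nl_int L K (rho t) y)) x dx /\
    dt + dx = 0.

Definition lin_flux (L vd : R) (K : R -> R) (rhobar : R) (u : R -> R) (x : R) : R :=
  u x * (vd - rhobar * nl_int L K (fun _ => 1) x) - rhobar * nl_int L K u x.

Definition lin_solves (L vd : R) (K : R -> R) (rhobar : R) (u : R -> R -> R) : Prop :=
  L_periodic L u /\
  forall t x, exists dt dx : R,
    is_derive (fun s => u s x) t dt /\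
    is_derive (lin_flux L vd K rhobar (u t)) x dx /\
    dt + dx = 0.

(* A complex-valued function solves the (real-coefficient, real-linear)
   linearized equation iff its real and imaginary parts do (derivatives and
   integrals of C-valued functions are taken componentwise). *)
Definition lin_solves_C (L vd : R) (K : R -> R) (rhobar : R) (u : R -> R -> C) : Prop :=
  lin_solves L vd K rhobar (fun t x => Re (u t x)) /\
  lin_solves L vd K rhobar (fun t x => Im (u t x)).

Definition fourier_mode (L : R) (k : Z) (sigma : C) : R -> R -> C :=
  fun t x => Cexp (sigma * RtoC t + Ci * RtoC (2 * PI / L * IZR k * x))%C.

(* Main.v *)
Require Import Defs.
From Stdlib Require Import Lra Classical_Prop.

Lemma cont_eps (f : R -> R) (z : R) :
  (forall eps, 0 < eps -> exists d, 0 < d /\ forall y, Rabs (y - z) < d -> Rabs (f y - f z) < eps) ->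
  continuous f z.
Proof.
  intros H. apply continuity_pt_filterlim. intros eps Heps.
  destruct (H eps Heps) as [d [Hd H']]. exists d. split; auto.
  intros y [_ Hy]. apply H'. exact Hy.
Qed.

Lemma right_lim_eps (K : R -> R) (K0 : R) :
  filterlim K (at_right 0) (locally K0) ->
  forall eps, 0 < eps -> exists d, 0 < d /\ forall y, 0 < y < d -> Rabs (K y - K0) < eps.
Proof.
  intros Hl eps He.
  assert (HP : locally K0 (fun u => Rabs (u - K0) < eps)).
  { exists (mkposreal eps He). intros u Hu. exact Hu. }
  destruct (Hl _ HP) as [d Hd]. exists d. split. apply cond_pos.
  intros y [Hy1 Hy2]. apply Hd; auto.
  change (Rabs (y - 0) < d). rewrite Rminus_0_r, Rabs_pos_eq; lra.
Qed.

Lemma K_decr (K : R -> R) (Rk : R)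
  (K_C2 : forall z, 0 < z < Rk -> ex_derive K z)
  (K_dec : forall z, 0 < z < Rk -> Derive K z < 0) :
  forall x y, 0 < x -> x < y -> y < Rk -> K y < K x.
Proof.
  intros x y Hx Hxy Hy.
  destruct (MVT_gen K x y (Derive K)) as [c [Hc Heq]].
  - intros z Hz. rewrite Rmin_left in Hz by lra. rewrite Rmax_right in Hz by lra.
    apply Derive_correct, K_C2; lra.
  - intros z Hz. rewrite Rmin_left in Hz by lra. rewrite Rmax_right in Hz by lra.
    apply continuity_pt_filterlim; apply (@ex_derive_continuous R_AbsRing R_NormedModule K z); apply K_C2; lra.
  - rewrite Rmin_left in Hc by lra. rewrite Rmax_right in Hc by lra.
    assert (Derive K c < 0) by (apply K_dec; lra).
    assert (Derive K c * (y - x) < 0) by (nra).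
    lra.
Qed.

Lemma left_lim_exists (K : R -> R) (Rk : R) (hR : 0 < Rk)
  (K_pos : forall z, 0 < z < Rk -> 0 < K z)
  (K_dc : forall x y, 0 < x -> x < y -> y < Rk -> K y < K x) :
  exists KR, 0 <= KR /\ forall eps, 0 < eps -> exists d, 0 < d /\
     forall y, Rk - d < y < Rk -> Rabs (K y - KR) < eps.
Proof.
  set (E := fun y => exists z, 0 < z < Rk /\ y = - K z).
  assert (Hb : bound E).
  { exists 0. intros y [z [Hz ->]]. specialize (K_pos z Hz). lra. }
  assert (Hne : exists x, E x).
  { exists (- K (Rk/2)). exists (Rk/2). split; [lra|reflexivity]. }
  destruct (completeness E Hb Hne) as [m [Hub Hlub]].
  exists (- m). split.
  { assert (m <= 0). { apply Hlub. intros y [z [Hz ->]]. specialize (K_pos z Hz). lra. } lra. }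
  intros eps He.
  assert (Hex : exists z, 0 < z < Rk /\ m - eps < - K z).
  { apply Classical_Prop.NNPP. intros Hn.
    assert (m <= m - eps). { apply Hlub. intros y [z [Hz ->]].
      apply Rnot_lt_le. intros Hc. apply Hn. exists z. split; auto. }
    lra. }
  destruct Hex as [z0 [Hz0 Hlt]].
  exists (Rk - z0). split. lra.
  intros y Hy.
  assert (- K y <= m). { apply Hub. exists y. split. lra. reflexivity. }
  assert (K y <= K z0). { destruct (Req_dec y z0) as [->|Hne']. lra.
    left. apply K_dc; lra. }
  rewrite Rabs_pos_eq; lra.
Qed.

Definition hh (K : R -> R) (K0 KR Rk : R) (z : R) : R :=
  if Rle_dec z 0 then K0 else if Rle_dec Rk z then KR else K z.

Lemma hh_cont (K : R -> R) (K0 KR Rk : R) (hR : 0 < Rk)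
  (K_C2 : forall z, 0 < z < Rk -> ex_derive K z)
  (H0 : forall eps, 0 < eps -> exists d, 0 < d /\ forall y, 0 < y < d -> Rabs (K y - K0) < eps)
  (HR : forall eps, 0 < eps -> exists d, 0 < d /\ forall y, Rk - d < y < Rk -> Rabs (K y - KR) < eps) :
  forall z, continuous (hh K K0 KR Rk) z.
Proof.
  intros z. apply cont_eps. intros eps He.
  destruct (Rlt_or_le z 0) as [Hz|Hz].
  { exists (-z). split. lra. intros y Hy. unfold hh.
    apply Rabs_def2 in Hy.
    destruct (Rle_dec y 0); [|lra]. destruct (Rle_dec z 0); [|lra].
    rewrite Rminus_diag, Rabs_R0; lra. }
  destruct (Rle_lt_or_eq_dec 0 z Hz) as [Hz'|<-].
  2:{ destruct (H0 eps He) as [d [Hd Hd']]. exists (Rmin d Rk). split.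
      apply Rmin_pos; lra. intros y Hy. unfold hh.
      apply Rabs_def2 in Hy. rewrite Rminus_0_r in Hy.
      pose proof (Rmin_l d Rk). pose proof (Rmin_r d Rk).
      destruct (Rle_dec 0 0); [|lra].
      destruct (Rle_dec y 0). rewrite Rminus_diag, Rabs_R0; lra.
      destruct (Rle_dec Rk y). lra. apply Hd'. lra. }
  destruct (Rlt_or_le z Rk) as [HzR|HzR].
  { assert (Hc : continuous K z) by (apply (@ex_derive_continuous R_AbsRing R_NormedModule K z); apply K_C2; lra).
    apply continuity_pt_filterlim in Hc.
    destruct (Hc eps He) as [d [Hd Hd']].
    exists (Rmin d (Rmin z (Rk - z))). split.
    { apply Rmin_pos; [lra|]. apply Rmin_pos; lra. }
    intros y Hy. pose proof (Rmin_l d (Rmin z (Rk - z))). pose proof (Rmin_r d (Rmin z (Rk - z))).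
    pose proof (Rmin_l z (Rk - z)). pose proof (Rmin_r z (Rk - z)).
    apply Rabs_def2 in Hy as Hy2.
    unfold hh. destruct (Rle_dec y 0); [lra|]. destruct (Rle_dec Rk y); [lra|].
    destruct (Rle_dec z 0); [lra|]. destruct (Rle_dec Rk z); [lra|].
    destruct (Req_dec y z) as [->|Hne]. rewrite Rminus_diag, Rabs_R0; lra.
    apply Hd'. split. split; [exact I|auto]. simpl. unfold R_dist. apply Rabs_def1; lra. }
  destruct (Rle_lt_or_eq_dec Rk z HzR) as [HzR'|<-].
  { exists (z - Rk). split. lra. intros y Hy. unfold hh.
    apply Rabs_def2 in Hy.
    destruct (Rle_dec y 0); [lra|]. destruct (Rle_dec z 0); [lra|].
    destruct (Rle_dec Rk y); [|lra]. destruct (Rle_dec Rk z); [|lra].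
    rewrite Rminus_diag, Rabs_R0; lra. }
  destruct (HR eps He) as [d [Hd Hd']]. exists (Rmin d Rk). split.
  apply Rmin_pos; lra. intros y Hy. unfold hh.
  apply Rabs_def2 in Hy.
  pose proof (Rmin_l d Rk). pose proof (Rmin_r d Rk).
  destruct (Rle_dec Rk 0); [lra|]. destruct (Rle_dec Rk Rk); [|lra].
  destruct (Rle_dec y 0). lra.
  destruct (Rle_dec Rk y). rewrite Rminus_diag, Rabs_R0; lra. apply Hd'. lra.
Qed.

Lemma int_K (K h g : R -> R) (L Rk : R) (hR : 0 < Rk) (hRL : Rk < L)
  (K_supp : forall z, z < 0 \/ Rk < z -> K z = 0)
  (Hh : forall z, 0 < z < Rk -> h z = K z)
  (Hc : forall z, continuous h z) (Hg : forall z, continuous g z) :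
  ex_RInt (fun z => K z * g z) 0 L /\
  RInt (fun z => K z * g z) 0 L = RInt (fun z => h z * g z) 0 Rk.
Proof.
  assert (E1 : ex_RInt (fun z => h z * g z) 0 Rk).
  { apply (@ex_RInt_continuous R_CompleteNormedModule). intros z _. apply (continuous_mult h g); auto. }
  assert (E1' : ex_RInt (fun z => K z * g z) 0 Rk).
  { apply (ex_RInt_ext (fun z => h z * g z)); auto.
    intros x Hx. rewrite Rmin_left, Rmax_right in Hx by lra. rewrite Hh; auto. }
  assert (E2 : ex_RInt (fun z => K z * g z) Rk L).
  { apply (ex_RInt_ext (fun _ => 0)). intros x Hx. rewrite Rmin_left, Rmax_right in Hx by lra.
    rewrite K_supp by lra. symmetry; apply Rmult_0_l. apply ex_RInt_const. }
  split. apply (ex_RInt_Chasles _ _ Rk); auto.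
  rewrite <- (RInt_Chasles _ 0 Rk L); auto.
  rewrite (RInt_ext (fun z => K z * g z) (fun _ => 0) Rk L).
  2:{ intros x Hx. rewrite Rmin_left, Rmax_right in Hx by lra. rewrite K_supp by lra. apply Rmult_0_l. }
  rewrite RInt_const. 
  rewrite (RInt_ext (fun z => K z * g z) (fun z => h z * g z) 0 Rk).
  2:{ intros x Hx. rewrite Rmin_left, Rmax_right in Hx by lra. rewrite Hh; auto. }
  change (RInt (fun z => h z * g z) 0 Rk + (L - Rk) * 0 = RInt (fun z => h z * g z) 0 Rk). ring.
Qed.

Lemma nl_shift (L : R) (K f : R -> R) (x : R) :
  ex_RInt (fun z => K z * f (z + x)) 0 L ->
  nl_int L K f x = RInt (fun z => K z * f (z + x)) 0 L.
Proof.
  intros H. unfold nl_int.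
  assert (H' : ex_RInt (fun z => K z * f (z + x)) (1 * x + - x) (1 * (x + L) + - x)).
  { replace (1 * x + - x) with 0 by ring. replace (1 * (x + L) + - x) with L by ring. exact H. }
  pose proof (RInt_comp_lin (fun z => K z * f (z + x)) 1 (-x) x (x + L) H') as Hc.
  replace (1 * x + - x) with 0 in Hc by ring. replace (1 * (x + L) + - x) with L in Hc by ring.
  rewrite <- Hc. apply RInt_ext. intros y _.
  change (K (y - x) * f y = 1 * (K (1 * y + - x) * f (1 * y + - x + x))).
  replace (1 * y + - x) with (y - x) by ring. replace (y - x + x) with y by ring. ring.
Qed.

Lemma pos_sin (K h : R -> R) (Rk w : R) (hR : 0 < Rk) (Hw : 0 < w)
  (Hh : forall z, 0 < z < Rk -> h z = K z)
  (Hc : forall z, continuous h z) (HhR : 0 <= h Rk)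
  (K_C2 : forall z, 0 < z < Rk -> ex_derive K z)
  (K_dec : forall z, 0 < z < Rk -> Derive K z < 0) :
  0 < RInt (fun z => h z * sin (w * z)) 0 Rk.
Proof.
  set (f := fun z => h z * sin (w * z)).
  set (F := fun z => (1 - cos (w * z)) / w).
  set (Phi := fun t => RInt f 0 t).
  assert (Hfc : forall z, continuous f z).
  { intros z. apply (continuous_mult h (fun z => sin (w * z))); auto.
    apply (@ex_derive_continuous R_AbsRing R_NormedModule). auto_derive; auto. }
  assert (Hex : forall b, ex_RInt f 0 b).
  { intros b. apply (@ex_RInt_continuous R_CompleteNormedModule). intros; auto. }
  assert (HPhi : forall t, is_derive Phi t (f t)).
  { intros t. apply (is_derive_RInt f Phi 0 t); auto.
    exists (mkposreal 1 Rlt_0_1). intros b _. apply (@RInt_correct R_CompleteNormedModule), Hex. }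
  assert (HF : forall z, is_derive F z (sin (w * z))).
  { intros z. unfold F. auto_derive; auto. field. lra. }
  assert (HFnn : forall z, 0 <= F z).
  { intros z. unfold F. pose proof (COS_bound (w * z)). apply Rdiv_le_0_compat; lra. }
  set (m := Rmin Rk (PI / w)).
  assert (Hm : 0 < m). { apply Rmin_pos; auto. apply Rdiv_lt_0_compat; auto. apply PI_RGT_0. }
  assert (Hm1 : m <= Rk) by apply Rmin_l.
  assert (Hm2 : m <= PI / w) by apply Rmin_r.
  assert (HFpos : forall z, 0 < z <= m -> 0 < F z).
  { intros z Hz. unfold F. apply Rdiv_lt_0_compat; auto.
    assert (w * z <= PI).
    { apply (Rmult_le_reg_r (/ w)). apply Rinv_0_lt_compat; auto.
      replace (w * z * / w) with z by (field; lra). unfold Rdiv in Hm2. lra. }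
    assert (0 < w * z) by (apply Rmult_lt_0_compat; lra).
    pose proof (cos_decreasing_1 0 (w * z)). rewrite cos_0 in H1.
    pose proof PI_RGT_0.
    assert (cos (w * z) < 1) by (apply H1; lra). lra. }
  set (Psi := fun t => Phi t - h t * F t).
  set (df := fun z => if Rlt_dec 0 z then if Rlt_dec z Rk then - Derive K z * F z else 0 else 0).
  assert (HPsi : forall z, 0 < z < Rk -> is_derive Psi z (df z)).
  { intros z Hz. unfold df. destruct (Rlt_dec 0 z); [|lra]. destruct (Rlt_dec z Rk); [|lra].
    assert (Hkf : is_derive (fun y => K y * F y) z (Derive K z * F z + K z * sin (w * z))).
    { apply (is_derive_mult K F z (Derive K z) (sin (w * z))).
      apply Derive_correct, K_C2; auto. apply HF. intros; apply Rmult_comm. }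
    assert (Hkf' : is_derive (fun y => h y * F y) z (Derive K z * F z + K z * sin (w * z))).
    { apply (is_derive_ext_loc (fun y => K y * F y)); auto.
      exists (mkposreal (Rmin z (Rk - z)) ltac:(apply Rmin_pos; lra)).
      intros y Hy. change (Rabs (y - z) < Rmin z (Rk - z)) in Hy.
      pose proof (Rmin_l z (Rk - z)). pose proof (Rmin_r z (Rk - z)).
      apply Rabs_def2 in Hy. rewrite Hh; auto. lra. }
    unfold Psi.
    assert (Hd := is_derive_minus _ _ _ _ _ (HPhi z) Hkf').
    replace (- Derive K z * F z) with (minus (f z) (Derive K z * F z + K z * sin (w * z))).
    exact Hd.
    unfold f. rewrite Hh by auto. change (@eq R (K z * sin (w * z) - (Derive K z * F z + K z * sin (w * z))) (- Derive K z * F z)); ring. }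
  assert (HPsic : forall z, continuity_pt Psi z).
  { intros z. apply continuity_pt_filterlim.
    apply (continuous_minus Phi (fun t => h t * F t)).
    apply (@ex_derive_continuous R_AbsRing R_NormedModule). eexists; apply HPhi.
    apply (continuous_mult h F); auto.
    apply (@ex_derive_continuous R_AbsRing R_NormedModule). eexists; apply HF. }
  assert (Hdfnn : forall z, 0 <= df z).
  { intros z. unfold df. destruct (Rlt_dec 0 z); [|lra]. destruct (Rlt_dec z Rk); [|lra].
    pose proof (K_dec z (conj r r0)). pose proof (HFnn z). nra. }
  assert (Hdfpos : forall z, 0 < z < m -> 0 < df z).
  { intros z Hz. unfold df. destruct (Rlt_dec 0 z); [|lra]. destruct (Rlt_dec z Rk); [|lra].
    pose proof (K_dec z (conj r r0)). assert (0 < F z) by (apply HFpos; lra). nra. }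
  assert (Hmvt : forall a b, 0 <= a < b -> b <= Rk -> exists c, a <= c <= b /\ Psi b - Psi a = df c * (b - a)).
  { intros a b Hab Hb. destruct (MVT_gen Psi a b df) as [c [Hcc Heq]].
    - intros x Hx. rewrite Rmin_left, Rmax_right in Hx by lra. apply HPsi. lra.
    - intros x _. apply HPsic.
    - rewrite Rmin_left, Rmax_right in Hcc by lra. exists c. auto. }
  assert (Hmono : forall a b, 0 <= a <= b -> b <= Rk -> Psi a <= Psi b).
  { intros a b Hab Hb. destruct (Req_dec a b) as [->|Hne]. lra.
    destruct (Hmvt a b) as [c [Hcc Heq]]; try lra. pose proof (Hdfnn c). nra. }
  assert (Hstrict : Psi (m/3) < Psi (2*m/3)).
  { destruct (Hmvt (m/3) (2*m/3)) as [c [Hcc Heq]]; try lra.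
    assert (0 < df c) by (apply Hdfpos; lra). nra. }
  assert (HPsi0 : Psi 0 = 0).
  { unfold Psi, Phi, F. rewrite RInt_point. rewrite Rmult_0_r, cos_0.
    change (@eq R (0 - h 0 * ((1 - 1) / w)) 0). field. lra. }
  assert (HPsiR : 0 < Psi Rk).
  { pose proof (Hmono 0 (m/3)). pose proof (Hmono (2*m/3) Rk). lra. }
  assert (@eq R (Phi Rk) (Psi Rk + h Rk * F Rk)) by (unfold Psi, Rminus; rewrite Rplus_assoc, Rplus_opp_l, Rplus_0_r; reflexivity).
  pose proof (HFnn Rk).
  assert (0 <= h Rk * F Rk) by (apply Rmult_le_pos; auto).
  change (0 < Phi Rk). lra.
Qed.

Lemma fm_re (L : R) (k : Z) (sigma : C) t x :
  Re (fourier_mode L k sigma t x) = exp (Re sigma * t) * cos (Im sigma * t + 2 * PI / L * IZR k * x).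
Proof.
  destruct sigma as [a b]. unfold fourier_mode, Cexp. simpl.
  f_equal; f_equal; ring.
Qed.

Theorem mainTheorem2
  (L vd Rk : R) (K : R -> R)
  (hL : 0 < L) (hvd : 0 < vd) (hR : 0 < Rk) (hRL : Rk < L)
  (K_supp : forall z, z < 0 \/ Rk < z -> K z = 0)
  (K_pos : forall z, 0 < z < Rk -> 0 < K z)
  (K_C2 : forall z, 0 < z < Rk ->
            ex_derive K z /\ ex_derive (Derive K) z /\ continuous (Derive_n K 2) z)
  (K_bdd : exists M, forall z, 0 < z < Rk ->
            Rabs (K z) <= M /\ Rabs (Derive_n K 2 z) <= M)
  (K_dec : forall z, 0 < z < Rk -> Derive K z < 0)
  (K_0 : K 0 = 0) (K_R : K Rk = 0)
  (K_0p : exists K0, 0 < K0 /\ filterlim K (at_right 0) (locally K0)) :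
  forall rhobar : R, 0 <= rhobar ->
    is_solution L vd K (fun _ _ => rhobar) /\
    (0 < rhobar ->
     forall (k : Z) (sigma : C), k <> 0%Z ->
       lin_solves_C L vd K rhobar (fourier_mode L k sigma) ->
       Re sigma < 0).
Proof.
  intros rhobar Hrho.
  destruct K_0p as [K0 [HK0 Hlim]].
  pose proof (right_lim_eps K K0 Hlim) as H0.
  assert (KC : forall z, 0 < z < Rk -> ex_derive K z) by (intros z Hz; apply (K_C2 z Hz)).
  pose proof (K_decr K Rk KC K_dec) as Kdc.
  destruct (left_lim_exists K Rk hR K_pos Kdc) as [KR [HKR HRl]].
  set (h := hh K K0 KR Rk).
  pose proof (hh_cont K K0 KR Rk hR KC H0 HRl) as Hhc.
  assert (Hh : forall z, 0 < z < Rk -> h z = K z).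
  { intros z Hz. unfold h, hh. destruct (Rle_dec z 0); [lra|]. destruct (Rle_dec Rk z); [lra|]. reflexivity. }
  assert (HhR : h Rk = KR).
  { unfold h, hh. destruct (Rle_dec Rk 0); [lra|]. destruct (Rle_dec Rk Rk); [reflexivity|lra]. }
  pose proof (fun g Hg => int_K K h g L Rk hR hRL K_supp Hh Hhc Hg) as IntK.
  split.
  { split. intros t x; reflexivity. intros t x. exists 0, 0. split. apply (@is_derive_const R_AbsRing R_NormedModule).
    split; [|ring].
    assert (Hc : forall y, nl_int L K (fun _ => rhobar) y = RInt (fun z => K z * rhobar) 0 L).
    { intros y. apply nl_shift. apply (IntK (fun _ => rhobar)). intros; apply continuous_const. }
    apply (is_derive_ext (fun _ => rhobar * (vd - RInt (fun z => K z * rhobar) 0 L))).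
    intros y; rewrite Hc; reflexivity. apply (@is_derive_const R_AbsRing R_NormedModule). }
  intros Hpos k sigma Hk [Hre _].
  destruct Hre as [_ Hre]. destruct (Hre 0 0) as [dt [dx [Hdt [Hdx Hsum]]]].
  set (c := 2 * PI / L * IZR k).
  assert (Hdt' : is_derive (fun s => Re (fourier_mode L k sigma s 0)) 0 (Re sigma)).
  { eapply is_derive_ext. intro s; symmetry; apply fm_re.
    auto_derive; auto. rewrite Rmult_0_r, exp_0, Rmult_0_r, Rmult_0_r, Rplus_0_r, cos_0, sin_0. ring. }
  assert (Edt : dt = Re sigma).
  { rewrite <- (is_derive_unique _ _ _ Hdt). apply is_derive_unique; auto. }
  set (A := RInt (fun z => K z * cos (c * z)) 0 L).
  set (B := RInt (fun z => K z * sin (c * z)) 0 L).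
  set (C1 := RInt (fun z => K z * 1) 0 L).
  assert (ExA : ex_RInt (fun z => K z * cos (c * z)) 0 L).
  { apply IntK. intros z. apply (@ex_derive_continuous R_AbsRing R_NormedModule). auto_derive; auto. }
  assert (ExB : ex_RInt (fun z => K z * sin (c * z)) 0 L).
  { apply IntK. intros z. apply (@ex_derive_continuous R_AbsRing R_NormedModule). auto_derive; auto. }
  assert (Hu0 : forall x, Re (fourier_mode L k sigma 0 x) = cos (c * x)).
  { intros x. rewrite fm_re. rewrite !Rmult_0_r, exp_0, Rplus_0_l, Rmult_1_l. reflexivity. }
  assert (Hflux : forall y, lin_flux L vd K rhobar (fun x => Re (fourier_mode L k sigma 0 x)) y
                    = cos (c * y) * (vd - rhobar * C1) - rhobar * (cos (c * y) * A - sin (c * y) * B)).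
  { intros y. unfold lin_flux. rewrite Hu0.
    rewrite (nl_shift L K (fun _ => 1) y).
    2:{ apply (IntK (fun _ => 1)). intros; apply continuous_const. }
    rewrite (nl_shift L K _ y).
    2:{ apply (ex_RInt_ext (fun z => K z * cos (c * (z + y)))).
        intros z _. rewrite Hu0. reflexivity.
        apply IntK. intros z. apply (@ex_derive_continuous R_AbsRing R_NormedModule). auto_derive; auto. }
    rewrite (RInt_ext (fun z => K z * Re (fourier_mode L k sigma 0 (z + y))) (fun z => plus (scal (cos (c * y)) (K z * cos (c * z))) (scal (- sin (c * y)) (K z * sin (c * z))))).
    2:{ intros z _. rewrite Hu0. replace (c * (z + y)) with (c * y + c * z) by ring.
        rewrite cos_plus. change (@eq R (K z * (cos (c * y) * cos (c * z) - sin (c * y) * sin (c * z)))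
          (cos (c * y) * (K z * cos (c * z)) + - sin (c * y) * (K z * sin (c * z)))). ring. }
    rewrite (@RInt_plus R_CompleteNormedModule). 2,3: apply (@ex_RInt_scal R_NormedModule); assumption.
    rewrite !(@RInt_scal R_CompleteNormedModule) by assumption. unfold A, B, C1.
    change (@eq R (cos (c * y) * (vd - rhobar * C1) - rhobar * (cos (c * y) * A + - sin (c * y) * B))
      (cos (c * y) * (vd - rhobar * C1) - rhobar * (cos (c * y) * A - sin (c * y) * B))). ring. }
  assert (Hdx' : is_derive (lin_flux L vd K rhobar (fun x => Re (fourier_mode L k sigma 0 x))) 0 (rhobar * c * B)).
  { eapply is_derive_ext. intro y; symmetry; apply Hflux.
    auto_derive; auto. rewrite Rmult_0_r, cos_0, sin_0. ring. }
  assert (Edx : dx = rhobar * c * B).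
  { rewrite <- (is_derive_unique _ _ _ Hdx). apply is_derive_unique; auto. }
  assert (HcB : 0 < c * B).
  { assert (HB : B = RInt (fun z => h z * sin (c * z)) 0 Rk).
    { apply IntK. intros z. apply (@ex_derive_continuous R_AbsRing R_NormedModule). auto_derive; auto. }
    assert (PI / L > 0) by (apply Rdiv_lt_0_compat; [apply PI_RGT_0|lra]).
    destruct (Z.lt_total k 0) as [Hk0|[Hk0|Hk0]]; [|contradiction|].
    - apply IZR_lt in Hk0. assert (Hc : c < 0). { assert (Ec : c = 2 * (PI / L) * IZR k) by (unfold c, Rdiv; ring). rewrite Ec. clear - H Hk0. nra. }
      assert (Hp := pos_sin K h Rk (- c) hR ltac:(lra) Hh Hhc ltac:(lra) KC K_dec).
      assert (HB' : B = - RInt (fun z => h z * sin (- c * z)) 0 Rk).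
      { rewrite HB. rewrite (RInt_ext _ (fun z => opp (h z * sin (- c * z)))).
        rewrite (@RInt_opp R_CompleteNormedModule). reflexivity.
        apply (@ex_RInt_continuous R_CompleteNormedModule). intros z _.
        apply (continuous_mult h (fun z => sin (- c * z))); auto.
        apply (@ex_derive_continuous R_AbsRing R_NormedModule). auto_derive; auto.
        intros z _. replace (- c * z) with (- (c * z)) by ring. rewrite sin_neg.
        change (@eq R (h z * sin (c * z)) (- (h z * - sin (c * z)))). ring. }
      rewrite HB'. clear - Hc Hp. nra.
    - apply IZR_lt in Hk0. assert (Hc : c > 0). { assert (Ec : c = 2 * (PI / L) * IZR k) by (unfold c, Rdiv; ring). rewrite Ec. clear - H Hk0. nra. }
      assert (Hp := pos_sin K h Rk c hR Hc Hh Hhc ltac:(lra) KC K_dec).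
      rewrite HB. clear - Hc Hp. nra. }
  clear - Edt Edx Hsum HcB Hpos. subst. nra.
Qed.
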